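(* Let $\mathcal{M}=(S,A,\delta)$ be a finite fuzzy transition system with discounting factor $\gamma\in(0,1)$, let $\epsilon\in(0,1]$, and let $N=\lceil \log\epsilon/\log\gamma\rceil$. Then $\|\Delta^N(d_0)-d^\gamma_f\|\le\epsilon$, where $d_0=\bot$ is the constant-zero function on $S\times S$ and $\|e\|=\max_{s,t\in S}|e(s,t)|$.
   Context: A fuzzy set on a finite set $X$ is a map $\mu:X\to[0,1]$; $\mathcal{F}(X)$ is the set of fuzzy sets on $X$; $\mu(U)=\max_{x\in U}\mu(x)$. A fuzzy transition system is $\mathcal{M}=(S,A,\delta)$ with $S,A$ finite and $\delta:S\times A\to\mathcal{P}(\mathcal{F}(S))$, each $\delta(s,a)$ finite. $\mathcal{D}(S)$ is the set of pseudo-ultrametrics $d:S\times S\to[0,1]$, ordered pointwise. Lifting: $\hat d(\mu,\eta)=1$ if $\mu(S)\ne\eta(S)$, and otherwise $\hat d(\mu,\eta)$ is the minimum of $\max_{u,v}\min(d(u,v),x_{uv})$ over $x_{uv}\ge0$ with $\max_v x_{uv}=\mu(u)$ for all $u$ and $\max_u x_{uv}=\eta(v)$ for all $v$. For finite $Z\subseteq\mathcal{F}(S)$: $\hat d(\mu,Z)=\min_{\eta\in Z}\hat d(\mu,\eta)$ if $Z\ne\emptyset$, else $1$. Hausdorff distance: $H_{\hat d}(\emptyset,\emptyset)=0$, otherwise $H_{\hat d}(Y,Z)=\max(\max_{\mu\in Y}\hat d(\mu,Z),\max_{\eta\in Z}\hat d(\eta,Y))$. $\Delta(d)(s,t)=\gamma\cdot\max_{a\in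 A}H_{\hat d}(\delta(s,a),\delta(t,a))$ is a monotone map $\mathcal{D}(S)\to\mathcal{D}(S)$, and the behavioural distance $d^\gamma_f$ is its least fixpoint. *)

(* Defs.v *)
From HB Require Import structures.
From mathcomp Require Import all_boot all_order all_algebra.
From mathcomp Require Import all_classical all_reals all_analysis.
Set Implicit Arguments. Unset Strict Implicit. Unset Printing Implicit Defensive.
Import Order.TTheory GRing.Theory Num.Theory.
Local Open Scope ring_scope.
Local Open Scope classical_set_scope.

Section FTS.
Variables (R : realType) (S A : finType).

Definition fuzzy_set (mu : {ffun S -> R}) : Prop := forall x, 0 <= mu x <= 1.

(* mu(S) = max_{x in S} mu x  (values are >= 0, so 0 is a neutral element) *)
Definition fheight (mu : {ffun S -> R}) : R := \big[Num.max/0]_(x : S) mu x.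

Definition pseudo_ultrametric (d : S -> S -> R) : Prop :=
  (forall s t, 0 <= d s t <= 1) /\ (forall s, d s s = 0) /\
  (forall s t, d s t = d t s) /\
  (forall s t u, d s u <= Num.max (d s t) (d t u)).

Definition coupling (mu eta : {ffun S -> R}) (x : S -> S -> R) : Prop :=
  (forall u v, 0 <= x u v) /\
  (forall u, \big[Num.max/0]_(v : S) x u v = mu u) /\
  (forall v, \big[Num.max/0]_(u : S) x u v = eta v).

Definition coupling_cost (d : S -> S -> R) (x : S -> S -> R) : R :=
  \big[Num.max/0]_(u : S) \big[Num.max/0]_(v : S) Num.min (d u v) (x u v).

(* lifting \hat d (the minimum is written as the infimum of the attained values) *)
Definition lift (d : S -> S -> R) (mu eta : {ffun S -> R}) : R :=
  if fheight mu != fheight eta then 1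
  else inf [set r | exists x, coupling mu eta x /\ r = coupling_cost d x].

Definition lift_set (d : S -> S -> R) (mu : {ffun S -> R}) (Z : seq {ffun S -> R}) : R :=
  match Z with
  | [::] => 1
  | eta :: Z' => foldr (fun e acc => Num.min (lift d mu e) acc) (lift d mu eta) Z'
  end.

Definition hausdorff (d : S -> S -> R) (Y Z : seq {ffun S -> R}) : R :=
  match Y, Z with
  | [::], [::] => 0
  | _, _ => Num.max (\big[Num.max/0]_(mu <- Y) lift_set d mu Z)
                    (\big[Num.max/0]_(eta <- Z) lift_set d eta Y)
  end.

Definition Delta (gamma : R) (delta : S -> A -> seq {ffun S -> R})
  (d : S -> S -> R) : S -> S -> R :=
  fun s t => gamma * \big[Num.max/0]_(a : A) hausdorff d (delta s a) (delta t a).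

Definition least_fixpoint (gamma : R) (delta : S -> A -> seq {ffun S -> R})
  (d : S -> S -> R) : Prop :=
  pseudo_ultrametric d /\ (forall s t, Delta gamma delta d s t = d s t) /\
  (forall d', pseudo_ultrametric d' -> (forall s t, Delta gamma delta d' s t = d' s t) ->
     forall s t, d s t <= d' s t).

Definition supnorm (e : S -> S -> R) : R :=
  \big[Num.max/0]_(s : S) \big[Num.max/0]_(t : S) `|e s t|.

End FTS.

(* Main.v *)
Require Import Defs.
From HB Require Import structures.
From mathcomp Require Import all_boot all_order all_algebra.
From mathcomp Require Import all_classical all_reals all_analysis.
From mathcomp Require Import lra.
Import Order.TTheory GRing.Theory Num.Theory.
Local Open Scope ring_scope.

Local Open Scope classical_set_scope.
Local Open Scope ring_scope.
Section Aux.
Variable R : realType.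

Lemma bigmax_ge0 (I : Type) (r : seq I) (P : pred I) (f : I -> R) :
  0 <= \big[Num.max/0]_(i <- r | P i) f i.
Proof.
elim: r => [|a r IH]; rewrite ?big_nil ?big_cons //.
by case: (P a) => //; rewrite le_max IH orbT.
Qed.

Lemma bigmax_lec (I : Type) (r : seq I) (f : I -> R) (c : R) :
  0 <= c -> (forall i, f i <= c) -> \big[Num.max/0]_(i <- r) f i <= c.
Proof. by move=> c0 H; elim/big_ind: _ => // x y Hx Hy; rewrite ge_max Hx Hy. Qed.

Lemma max_shift (a b a' b' k : R) : a <= a' + k -> b <= b' + k ->
  Num.max a b <= Num.max a' b' + k.
Proof.
move=> H1 H2; rewrite ge_max; apply/andP; split.
  by apply: (le_trans H1); rewrite lerD2r le_max lexx.
by apply: (le_trans H2); rewrite lerD2r le_max lexx orbT.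
Qed.

Lemma min_shift (a b a' b' k : R) : a <= a' + k -> b <= b' + k ->
  Num.min a b <= Num.min a' b' + k.
Proof.
move=> H1 H2; case: (lerP a' b') => h.
  by apply: le_trans H1; rewrite ge_min lexx.
by apply: le_trans H2; rewrite ge_min lexx orbT.
Qed.

Lemma bigmax_shift (I : Type) (r : seq I) (f g : I -> R) (k : R) :
  0 <= k -> (forall i, f i <= g i + k) ->
  \big[Num.max/0]_(i <- r) f i <= \big[Num.max/0]_(i <- r) g i + k.
Proof.
move=> k0 H; elim: r => [|a r IH]; first by rewrite !big_nil add0r.
by rewrite !big_cons; apply: max_shift.
Qed.

Variables (S A : finType).

Lemma cost_ge0 (d : S -> S -> R) x : 0 <= coupling_cost d x.
Proof. exact: bigmax_ge0. Qed.

Lemma cost_shift (d d' : S -> S -> R) (k : R) x : 0 <= k ->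
  (forall s t, d s t <= d' s t + k) ->
  coupling_cost d x <= coupling_cost d' x + k.
Proof.
move=> k0 H; rewrite /coupling_cost; apply: bigmax_shift => // u.
apply: bigmax_shift => // v; apply: min_shift => //.
by rewrite lerDl.
Qed.

Lemma lift_shift (d d' : S -> S -> R) (k : R) mu eta : 0 <= k ->
  (forall s t, d s t <= d' s t + k) ->
  Defs.lift d mu eta <= Defs.lift d' mu eta + k.
Proof.
move=> k0 H; rewrite /Defs.lift; case: ifP => _; first by rewrite lerDl.
case: (pselect (exists x, coupling mu eta x)) => [[x0 Hx0]|nex]; last first.
  have E : forall dd : S -> S -> R,
    [set r | exists x, coupling mu eta x /\ r = coupling_cost dd x] = set0.
    by move=> dd; apply/seteqP; split=> r // [x [Hx _]]; apply: nex; exists x.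
  by rewrite !E inf0 add0r.
rewrite -lerBlDr; apply: lb_le_inf.
  by exists (coupling_cost d' x0); exists x0.
move=> r [x [Hx ->]].
have hc := cost_shift d d' k x k0 H.
rewrite lerBlDr; apply: le_trans hc.
apply: ge_inf; last by exists x.
by exists 0 => r' [y [_ ->]]; exact: cost_ge0.
Qed.

Lemma lift_set_shift (d d' : S -> S -> R) (k : R) mu Z : 0 <= k ->
  (forall s t, d s t <= d' s t + k) ->
  lift_set d mu Z <= lift_set d' mu Z + k.
Proof.
move=> k0 H; case: Z => [|eta Z] /=; first by rewrite lerDl.
have : Defs.lift d mu eta <= Defs.lift d' mu eta + k by exact: lift_shift.
elim: Z (Defs.lift d mu eta) (Defs.lift d' mu eta) => [|e Z IH] a a' Ha //=.
apply: min_shift; first exact: lift_shift.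
exact: IH.
Qed.

Lemma hausdorff_shift (d d' : S -> S -> R) (k : R) Y Z : 0 <= k ->
  (forall s t, d s t <= d' s t + k) ->
  hausdorff d Y Z <= hausdorff d' Y Z + k.
Proof.
move=> k0 H.
have G : Num.max (\big[Num.max/0]_(mu <- Y) lift_set d mu Z)
                    (\big[Num.max/0]_(eta <- Z) lift_set d eta Y) <=
         Num.max (\big[Num.max/0]_(mu <- Y) lift_set d' mu Z)
                    (\big[Num.max/0]_(eta <- Z) lift_set d' eta Y) + k.
  by apply: max_shift; apply: bigmax_shift => // i; apply: lift_set_shift.
by case: Y G => [|y Y]; case: Z => [|z Z] //= _; rewrite add0r.
Qed.

Lemma Delta_shift gamma delta (d d' : S -> S -> R) (k : R) : 0 <= gamma -> 0 <= k ->
  (forall s t, d s t <= d' s t + k) ->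
  forall s t, Delta (A:=A) gamma delta d s t <= Delta gamma delta d' s t + gamma * k.
Proof.
move=> g0 k0 H s t; rewrite /Delta -mulrDr ler_wpM2l //.
by apply: bigmax_shift => // a; apply: hausdorff_shift.
Qed.

End Aux.

Theorem theorem2 (R : realType) (S A : finType)
  (delta : S -> A -> seq {ffun S -> R})
  (Hdelta : forall s a mu, mu \in delta s a -> fuzzy_set mu)
  (gamma eps : R) (Hgamma : 0 < gamma < 1) (Heps : 0 < eps <= 1)
  (N : nat) (HN : (N : int) = Num.ceil (ln eps / ln gamma))
  (df : S -> S -> R) (Hdf : least_fixpoint gamma delta df) :
  supnorm (fun s t => iter N (Delta gamma delta) (fun _ _ => 0) s t - df s t) <= eps.
Proof.
have [g0 g1] : 0 < gamma /\ gamma < 1 by case/andP: Hgamma.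
have [e0 e1] : 0 < eps /\ eps <= 1 by case/andP: Heps.
case: Hdf => [[Hb _] [Hfix _]].
have key : forall n s t,
  iter n (Delta gamma delta) (fun _ _ => 0) s t <= df s t + gamma ^+ n /\
  df s t <= iter n (Delta gamma delta) (fun _ _ => 0) s t + gamma ^+ n.
  elim=> [|n IH] s t.
    by have /andP[h0 h1] := Hb s t; rewrite /= expr0; split; lra.
  rewrite iterS exprS; split.
    rewrite -(Hfix s t); apply: Delta_shift => //; first exact: ltW.
      exact: exprn_ge0 (ltW g0).
    by move=> u v; case: (IH u v).
  rewrite -(Hfix s t); apply: Delta_shift => //; first exact: ltW.
    exact: exprn_ge0 (ltW g0).
  by move=> u v; case: (IH u v).
have gN : gamma ^+ N <= eps.
  have lg : ln gamma < 0 by apply: ln_lt0; rewrite g0 g1.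
  have hx : ln eps / ln gamma <= N%:R.
    by have := ceil_ge (ln eps / ln gamma); rewrite -HN pmulrn.
  have : N%:R * ln gamma <= ln eps.
    have lg0 : ln gamma != 0 :> R by rewrite lt_eqF.
    by have := ler_wnM2r (ltW lg) hx; rewrite divfK.
  by move=> h; rewrite -ler_ln ?posrE ?exprn_gt0 // lnXn // -mulr_natr mulrC.
have gN0 : 0 <= gamma ^+ N by exact: exprn_ge0 (ltW g0).
apply: le_trans gN; rewrite /supnorm; apply: bigmax_lec => // s.
apply: bigmax_lec => // t; rewrite ler_norml.
by case: (key N s t) => h1 h2; apply/andP; split; lra.
Qed.
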